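(* Let $f:\mathbb{R}^m\to\mathbb{R}^m$, $y_0\in\mathbb{R}^m$, $T>0$, $h>0$, and let $(y_n)$ be defined by $y_{n+1}=y_n+hf(y_n)$ for $0\le n<\lfloor T/h\rfloor$. For $R>0$ let $\Omega=\{y:\|y-y_0\|<R\}$ and suppose $f$ is Lipschitz on $\Omega$ with constant $\mathcal{L}_f:=\sup_{y_1\ne y_2,\ y_1,y_2\in\Omega}\frac{\|f(y_2)-f(y_1)\|}{\|y_2-y_1\|}\in(0,\infty)$. If \[ R>\frac{1}{\mathcal{L}_f}\Big((1+\mathcal{L}_fh)^{\lfloor T/h\rfloor}-1\Big)\|f(y_0)\|, \] then $\|y_n-y_0\|\le R$ for all $n=0,1,\dots,\lfloor T/h\rfloor$.
   Context: $\|\cdot\|$ is the Euclidean norm and $\lfloor x\rfloor$ the largest integer not exceeding $x$. *)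

(* Defs.v *)
From mathcomp Require Import all_boot all_order all_algebra reals.
Set Implicit Arguments. Unset Strict Implicit. Unset Printing Implicit Defensive.
Import Order.TTheory GRing.Theory Num.Theory.
Local Open Scope ring_scope.

Definition enorm (R : realType) (m : nat) (v : 'rV[R]_m) : R :=
  Num.sqrt (\sum_(i < m) v ord0 i ^+ 2).

Definition oball (R : realType) (m : nat) (c : 'rV[R]_m) (r : R) (y : 'rV[R]_m) : Prop :=
  enorm (y - c) < r.

Definition lip_quotient_ub (R : realType) (m : nat) (Om : 'rV[R]_m -> Prop)
  (f : 'rV[R]_m -> 'rV[R]_m) (M : R) : Prop :=
  forall y1 y2, Om y1 -> Om y2 -> y1 <> y2 ->
    enorm (f y2 - f y1) / enorm (y2 - y1) <= M.

Definition is_lip_sup (R : realType) (m : nat) (Om : 'rV[R]_m -> Prop)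
  (f : 'rV[R]_m -> 'rV[R]_m) (L : R) : Prop :=
  lip_quotient_ub Om f L /\ (forall M, lip_quotient_ub Om f M -> L <= M).

(* Main.v *)
Require Import Defs.
From mathcomp Require Import all_boot all_order all_algebra reals.
From mathcomp Require Import ring lra.
Import Order.TTheory GRing.Theory Num.Theory.
Local Open Scope ring_scope.

Section Aux.
Context {R : realType} {m : nat}.

Lemma cs_sum (a b : 'I_m -> R) :
  (\sum_i a i * b i) ^+ 2 <= (\sum_i a i ^+ 2) * (\sum_i b i ^+ 2).
Proof.
set A := \sum_i a i ^+ 2; set B := \sum_i b i ^+ 2; set C := \sum_i a i * b i.
have A0 : 0 <= A by apply: sumr_ge0 => i _; apply: sqr_ge0.
have [AE|Apos] := eqVneq A 0.
  have ai : forall i, a i = 0.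
    move=> i; apply/eqP; rewrite -sqrf_eq0; apply/eqP.
    exact: (psumr_eq0P (fun i _ => sqr_ge0 (a i)) AE).
  have -> : C = 0 by rewrite /C big1 // => i _; rewrite ai mul0r.
  by rewrite AE expr0n /= mul0r.
have Agt : 0 < A by rewrite lt_def Apos A0.
have H : 0 <= \sum_i (A * b i - C * a i) ^+ 2 by apply: sumr_ge0 => i _; apply: sqr_ge0.
have E : \sum_i (A * b i - C * a i) ^+ 2 = A * (A * B - C ^+ 2).
  have -> : \sum_i (A * b i - C * a i) ^+ 2 =
     \sum_i (A ^+ 2 * b i ^+ 2 - (2 * A * C) * (a i * b i) + C ^+ 2 * a i ^+ 2).
    by apply: eq_bigr => i _; ring.
  rewrite big_split /= sumrB -!mulr_sumr /=.
  rewrite -/A -/B -/C; ring.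
rewrite E in H.
have : 0 <= A * B - C ^+ 2 by rewrite -(pmulr_rge0 _ Agt).
lra.
Qed.

Lemma enorm_ge0 (v : 'rV[R]_m) : 0 <= enorm v.
Proof. exact: sqrtr_ge0. Qed.

Lemma enorm0 : enorm (0 : 'rV[R]_m) = 0.
Proof. by rewrite /enorm big1 ?sqrtr0 // => i _; rewrite mxE expr0n. Qed.

Lemma enorm_eq0 (v : 'rV[R]_m) : enorm v = 0 -> v = 0.
Proof.
move=> /eqP; rewrite /enorm sqrtr_eq0 => H.
have S0 : 0 <= \sum_(i < m) v ord0 i ^+ 2 by apply: sumr_ge0 => i _; apply: sqr_ge0.
have E : \sum_(i < m) v ord0 i ^+ 2 = 0 by apply/eqP; rewrite eq_le H S0.
apply/matrixP => i j; rewrite mxE (ord1 i).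
apply/eqP; rewrite -sqrf_eq0; apply/eqP.
exact: (psumr_eq0P (fun i _ => sqr_ge0 (v ord0 i)) E).
Qed.

Lemma enormZ (c : R) (v : 'rV[R]_m) : enorm (c *: v) = `|c| * enorm v.
Proof.
rewrite /enorm.
have -> : \sum_(i < m) (c *: v) ord0 i ^+ 2 = c ^+ 2 * \sum_(i < m) v ord0 i ^+ 2.
  by rewrite mulr_sumr; apply: eq_bigr => i _; rewrite mxE exprMn.
by rewrite sqrtrM ?sqr_ge0 // sqrtr_sqr.
Qed.

Lemma enormD (u v : 'rV[R]_m) : enorm (u + v) <= enorm u + enorm v.
Proof.
rewrite /enorm.
set A := \sum_(i < m) u ord0 i ^+ 2; set B := \sum_(i < m) v ord0 i ^+ 2.
set C := \sum_(i < m) u ord0 i * v ord0 i.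
have A0 : 0 <= A by apply: sumr_ge0 => i _; apply: sqr_ge0.
have B0 : 0 <= B by apply: sumr_ge0 => i _; apply: sqr_ge0.
have -> : \sum_(i < m) (u + v) ord0 i ^+ 2 = A + B + 2 * C.
  rewrite /A /B /C mulr_sumr -!big_split /=; apply: eq_bigr => i _.
  rewrite mxE; ring.
have CS : C <= Num.sqrt A * Num.sqrt B.
  rewrite -sqrtrM //.
  apply: (le_trans (ler_norm C)).
  rewrite -sqrtr_sqr ler_sqrt; last by apply: mulr_ge0.
  exact: cs_sum.
have sA := sqr_sqrtr A0; have sB := sqr_sqrtr B0.
have sA0 := sqrtr_ge0 A; have sB0 := sqrtr_ge0 B.
rewrite -[X in _ <= X]ger0_norm ?addr_ge0 // -sqrtr_sqr ler_sqrt; last by apply: sqr_ge0.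
move: sA sB CS; set a := Num.sqrt A; set b := Num.sqrt B => sA sB CS.
have -> : (a + b) ^+ 2 = a ^+ 2 + b ^+ 2 + 2 * (a * b) by ring.
rewrite sA sB; lra.
Qed.

End Aux.

Theorem lemma3p8 (R : realType) (m : nat) (f : 'rV[R]_m -> 'rV[R]_m)
  (y0 : 'rV[R]_m) (T h : R) (y : nat -> 'rV[R]_m) (N : nat) (Rad Lf : R) :
  0 < T -> 0 < h ->
  (N : int) = Num.floor (T / h) ->
  y 0%N = y0 ->
  (forall n : nat, (n < N)%N -> y n.+1 = y n + h *: f (y n)) ->
  0 < Rad ->
  is_lip_sup (oball y0 Rad) f Lf -> 0 < Lf ->
  Rad > Lf^-1 * ((1 + Lf * h) ^+ N - 1) * enorm (f y0) ->
  forall n : nat, (n <= N)%N -> enorm (y n - y0) <= Rad.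
Proof.
move=> T0 h0 _ Y0 rec R0 [lip _] L0 HR.
set F := enorm (f y0).
set q := 1 + Lf * h.
have F0 : 0 <= F := enorm_ge0 _.
have q1 : 1 <= q by rewrite /q lerDl; apply: mulr_ge0; apply: ltW.
pose bnd (n : nat) := Lf^-1 * (q ^+ n - 1) * F.
have bndN : forall n, (n <= N)%N -> bnd n < Rad.
  move=> n nN; apply: le_lt_trans HR; rewrite /bnd.
  apply: (ler_wpM2r F0).
  have Li : 0 <= Lf^-1 by rewrite invr_ge0 ltW.
  apply: (ler_wpM2l Li).
  by rewrite lerD2r; apply: ler_weXn2l.
have fb : forall x, oball y0 Rad x -> enorm (f x) <= F + Lf * enorm (x - y0).
  move=> x Hx.
  have -> : f x = f y0 + (f x - f y0) by rewrite addrC subrK.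
  apply: (le_trans (enormD _ _)); rewrite lerD2l.
  have [->|nxy] := eqVneq x y0.
    by rewrite subrr enorm0 subrr enorm0 mulr0.
  have pos : 0 < enorm (x - y0).
    rewrite lt_def enorm_ge0 andbT; apply/eqP => /enorm_eq0/eqP.
    by rewrite subr_eq0 (negbTE nxy).
  have Hy0 : oball y0 Rad y0 by rewrite /oball subrr enorm0.
  have := lip _ _ Hy0 Hx (fun e => (negP nxy) (introT eqP (esym e))).
  by rewrite ler_pdivrMr // mulrC.
have claim : forall n, (n <= N)%N -> enorm (y n - y0) <= bnd n.
  elim=> [_|n IH nN].
    by rewrite Y0 subrr enorm0 /bnd expr0 subrr mulr0 mul0r.
  have nN' : (n <= N)%N by apply: ltnW.
  have IHn := IH nN'.
  have inb : oball y0 Rad (y n) by rewrite /oball; apply: le_lt_trans (bndN _ nN').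
  have := fb _ inb.
  rewrite rec //.
  have -> : y n + h *: f (y n) - y0 = (y n - y0) + h *: f (y n) by rewrite addrAC.
  move=> Hf.
  apply: (le_trans (enormD _ _)); rewrite enormZ (ger0_norm (ltW h0)).
  have e0 := enorm_ge0 (y n - y0).
  have step : enorm (y n - y0) + h * enorm (f (y n)) <= q * enorm (y n - y0) + h * F.
    have := ler_wpM2l (ltW h0) Hf; rewrite mulrDr => H.
    have -> : q * enorm (y n - y0) + h * F = enorm (y n - y0) + (h * F + h * (Lf * enorm (y n - y0))) by rewrite /q; ring.
    by rewrite lerD2l.
  apply: (le_trans step).
  have E : bnd n.+1 = q * bnd n + h * F.
    rewrite /bnd exprS /q; field; exact: lt0r_neq0.
  rewrite E lerD2r; apply: ler_wpM2l => //; exact: le_trans ler01 q1.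
move=> n nN; apply: (le_trans (claim n nN)); apply: ltW; exact: bndN.
Qed.
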